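(* Let $G$ be a cactus. Then the sparing number of $G$ is $r$, where $r$ is the number of odd cycles in $G$.
   Context: A cactus is a connected graph in which any two simple cycles have at most one vertex in common; equivalently, every block is a simple cycle or a single edge. Let $\mathbb{N}_0$ be the set of non-negative integers; for $A,B\subseteq\mathbb{N}_0$, $A+B=\{a+b:a\in A,b\in B\}$. An integer additive set-indexer (IASI) of a graph $G$ is an injective map $f:V(G)\to\mathcal{P}(\mathbb{N}_0)$ such that $f^+:E(G)\to\mathcal{P}(\mathbb{N}_0)$, $f^+(uv)=f(u)+f(v)$, is injective. A weak IASI is an IASI with $|f^+(uv)|=\max(|f(u)|,|f(v)|)$ for every edge $uv$. An edge $e$ is mono-indexed if $|f^+(e)|=1$. The sparing number $\varphi(G)$ is the minimum number of mono-indexed edges over all weak IASIs of $G$. *)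

(* Defs.v *)
From Stdlib Require Import ClassicalEpsilon.
From mathcomp Require Import all_boot.
From mathcomp Require Import finmap.
Set Implicit Arguments. Unset Strict Implicit. Unset Printing Implicit Defensive.
Local Open Scope fset_scope.

Definition decP (P : Prop) : bool :=
  if excluded_middle_informative P then true else false.

Section Graphs.
Variables (T : finType) (e : rel T).

Definition simple_graph : Prop := symmetric e /\ irreflexive e.

Definition connected_graph : Prop := forall x y : T, connect e x y.

Definition edges : {set {set T}} :=
  [set [set x; y] | x in T, y in T & e x y].

Definition simple_cycle (p : seq T) : Prop :=
  [/\ 3 <= size p, uniq p & cycle e p].

(* the cycle as a subgraph, identified with its edge set *)
Definition cycle_edges (p : seq T) : {set {set T}} :=
  [set [set x; next p x] | x in p].

Definition cycle_vertices (p : seq T) : {set T} := [set x in p].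

Definition cactus : Prop :=
  connected_graph /\
  forall p q : seq T, simple_cycle p -> simple_cycle q ->
    cycle_edges p != cycle_edges q ->
    #|cycle_vertices p :&: cycle_vertices q| <= 1.

Definition num_odd_cycles : nat :=
  #|[set C : {set {set T}} |
      decP (exists p, [/\ simple_cycle p, odd (size p) & C = cycle_edges p])]|.

Definition sumset (A B : {fset nat}) : {fset nat} :=
  [fset (a + b)%N | a in A, b in B].

Definition IASI (f : T -> {fset nat}) : Prop :=
  injective f /\
  forall x y u v, e x y -> e u v -> sumset (f x) (f y) = sumset (f u) (f v) ->
    [set x; y] = [set u; v].

Definition weak_IASI (f : T -> {fset nat}) : Prop :=
  IASI f /\
  forall x y, e x y -> #|` sumset (f x) (f y)| = maxn #|` f x| #|` f y|.

Definition mono_indexed_edges (f : T -> {fset nat}) : {set {set T}} :=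
  [set [set x; y] | x in T, y in T & e x y && (#|` sumset (f x) (f y)| == 1)].

Definition is_sparing_number (k : nat) : Prop :=
  (exists f, weak_IASI f /\ #|mono_indexed_edges f| = k) /\
  (forall f, weak_IASI f -> k <= #|mono_indexed_edges f|).

End Graphs.

(* Main.v *)
Require Import Defs.
From Stdlib Require Import ClassicalEpsilon.
From mathcomp Require Import all_boot.
From mathcomp Require Import finmap.
From mathcomp Require Import zify.
Set Implicit Arguments. Unset Strict Implicit. Unset Printing Implicit Defensive.

Section SeqLemmas.
Variable T : eqType.

Lemma path_parity (f : T -> T) (P : pred T) x s :
  path (frel f) x s ->
  odd (count (fun z => P z != P (f z)) (belast x s)) = (P x != P (last x s)).
Proof.
elim: s x => [|y s IH] x /=; first by rewrite eqxx.
case/andP => /eqP fx /IH IHs; rewrite oddD IHs fx oddb.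
by case: (P x); case: (P y); case: (P (last y s)).
Qed.

Lemma cycle_parity (P : pred T) (p : seq T) :
  uniq p -> ~~ odd (count (fun z => P z != P (next p z)) p).
Proof.
case: p => [|x q] // U; have := cycle_next U; rewrite /= => H.
by have := path_parity P H; rewrite belast_rcons last_rcons eqxx => ->.
Qed.

Lemma path_const (f : T -> T) (P : pred T) x s :
  path (frel f) x s -> (forall z, z \in belast x s -> P z = P (f z)) ->
  forall z, z \in x :: s -> P z = P x.
Proof.
elim: s x => [|y s IH] x /=; first by move=> _ _ z; rewrite inE => /eqP->.
case/andP => /eqP fx Hp H z; rewrite inE => /orP[/eqP->//|zin].
have Hxy : P y = P x by rewrite -fx -H // mem_head.
rewrite -Hxy; apply: IH => // t tin; apply: H; by rewrite inE tin orbT.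
Qed.

Lemma cycle_const (P : pred T) (p : seq T) :
  uniq p -> (forall z, z \in p -> P z = P (next p z)) ->
  forall y z, y \in p -> z \in p -> P y = P z.
Proof.
case: p => [|x q] // U H; have := cycle_next U; rewrite /= => Hp.
have K := path_const Hp; rewrite belast_rcons in K.
move=> y z yin zin; rewrite (K P H y) ?(K P H z) //.
- by move: zin; rewrite !inE mem_rcons inE; case: (z == x) => //= ->; rewrite orbT.
- by move: yin; rewrite !inE mem_rcons inE; case: (y == x) => //= ->; rewrite orbT.
Qed.

Lemma next_next_neq (p : seq T) z :
  uniq p -> 2 < size p -> z \in p -> next p (next p z) != z.
Proof.
move=> U S zin; case: (rot_to zin) => i s E.
have U' : uniq (z :: s) by rewrite -E rot_uniq.
have S' : 2 < size (z :: s) by rewrite -E size_rot.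
rewrite -!(next_rot i U) E.
case: s U' S' E => [|y [|a t]] //= U' _ _.
move: U'; rewrite !inE !negb_or => /andP[/andP[zy /andP[za _]] _].
by rewrite eqxx (eq_sym y z) (negbTE zy) eqxx eq_sym.
Qed.

Lemma count_le1 (P : pred T) s : uniq s ->
  (forall a b, a \in s -> b \in s -> P a -> P b -> a = b) -> count P s <= 1.
Proof.
elim: s => [|x s IH] //= /andP[xs U] H.
case Px: (P x) => /=.
  rewrite add1n ltnS leqn0 eqn0Ngt -has_count; apply/hasPn => y ys; apply/negP => Py.
  have E : x = y by apply: H; rewrite ?inE ?eqxx ?ys ?orbT.
  by rewrite E ys in xs.
apply: IH => // a b ain bin; apply: H; by rewrite inE ?ain ?bin orbT.
Qed.

End SeqLemmas.

Section Graph.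
Variable T : finType.
Implicit Types (e : rel T) (c : pred T) (p C : seq T).

Lemma count_rot (a : pred T) n (s : seq T) : count a (rot n s) = count a s.
Proof. by rewrite /rot count_cat addnC -count_cat cat_take_drop. Qed.

Definition remove e u v : rel T := [rel a b | e a b && ([set a; b] != [set u; v])].

Lemma remove_sym e u v : remove e u v = remove e v u.
Proof. by rewrite /remove [[set u; v]]setUC. Qed.

Lemma remove_sub e u v : subrel (remove e u v) e.
Proof. by move=> a b /andP[]. Qed.

Definition cactusP e := forall p q, simple_cycle e p -> simple_cycle e q ->
    cycle_edges p != cycle_edges q ->
    #|cycle_vertices p :&: cycle_vertices q| <= 1.

Definition oddcyc e C := simple_cycle e C /\ odd (size C).

Definition valid e c :=
  [/\ (forall x y, e x y -> c x || c y),
      (forall x y, e x y -> c x -> c y ->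
         exists C, oddcyc e C /\ [set x; y] \in cycle_edges C) &
      (forall C, oddcyc e C -> forall x y, x \in C -> y \in C ->
         c x -> c (next C x) -> c y -> c (next C y) -> x = y)].

Lemma set2_eqP (a b u v : T) : a != b -> [set a; b] = [set u; v] ->
  (a = u /\ b = v) \/ (a = v /\ b = u).
Proof.
move=> ab E.
have : a \in [set u; v] by rewrite -E set21.
have : b \in [set u; v] by rewrite -E set22.
rewrite !inE => /orP[]/eqP Hb /orP[]/eqP Ha; subst; rewrite ?eqxx in ab; by auto.
Qed.

Lemma mem_cycle_edges p E :
  reflect (exists2 z, z \in p & E = [set z; next p z]) (E \in cycle_edges p).
Proof. exact: imsetP. Qed.

Lemma simple_cycle_sub e e' p : subrel e e' -> simple_cycle e p -> simple_cycle e' p.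
Proof. by move=> s [h1 h2 h3]; split=> //; apply: sub_cycle h3. Qed.

Lemma sc_next e p z : simple_cycle e p -> z \in p -> e z (next p z).
Proof. by case=> _ _ h; apply: next_cycle. Qed.

Lemma sc_next_neq e p z : irreflexive e -> simple_cycle e p -> z \in p -> z != next p z.
Proof.
move=> irr sc zin; apply/eqP => E; have := sc_next sc zin; by rewrite -E irr.
Qed.

Lemma key_share e C1 C2 x y : cactusP e -> simple_cycle e C1 -> simple_cycle e C2 ->
  x != y -> x \in C1 -> y \in C1 -> x \in C2 -> y \in C2 ->
  cycle_edges C1 = cycle_edges C2.
Proof.
move=> cac s1 s2 xy x1 y1 x2 y2; apply/eqP; apply/negPn/negP => ne.
have := cac _ _ s1 s2 ne.
have sub : [set x; y] \subset cycle_vertices C1 :&: cycle_vertices C2.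
  by apply/subsetP => z; rewrite !inE => /orP[]/eqP->; rewrite ?x1 ?x2 ?y1 ?y2.
have := subset_leq_card sub; rewrite cards2 xy => h1 h2.
by have := leq_trans h1 h2.
Qed.


Lemma memE C z a : z \in C -> a \in [set z; next C z] -> a \in C.
Proof. move=> zin; rewrite !inE => /orP[]/eqP->; by rewrite ?mem_next. Qed.

Lemma lemL e C0 u c : irreflexive e -> cactusP e ->
  simple_cycle e C0 -> u \in C0 ->
  valid (remove e u (next C0 u)) c -> (odd (size C0) -> c u || c (next C0 u)) ->
  valid e c.
Proof.
move=> irr cac sc0 uin [V1 V2 V3] hodd.
set v := next C0 u in V1 V2 V3 hodd *.
set e' := remove e u v in V1 V2 V3 *.
have [S0 U0 Cy0] := sc0.
have vin : v \in C0 by rewrite mem_next.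
have euv : e u v := sc_next sc0 uin.
have uv : u != v := sc_next_neq irr sc0 uin.
have F1 : forall z, z \in C0 -> z != u -> e' z (next C0 z).
  move=> z zin zu; rewrite /e' /remove /= (sc_next sc0 zin) /=; apply/eqP => E.
  case: (set2_eqP (sc_next_neq irr sc0 zin) E) => [[zu' _]|[zv nzu]].
    by rewrite zu' eqxx in zu.
  by have := next_next_neq U0 S0 uin; rewrite -/v -zv nzu eqxx.
have sc_e'e : forall C, simple_cycle e' C -> simple_cycle e C.
  by move=> C; apply: simple_cycle_sub; apply: remove_sub.
have F2 : forall z, z \in C0 -> z != u -> ~~ (c z && c (next C0 z)).
  move=> z zin zu; apply/negP => /andP[cz cnz].
  have [C [[scC oddC] inC]] := V2 _ _ (F1 z zin zu) cz cnz.
  have scCe := sc_e'e _ scC.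
  case/mem_cycle_edges: inC => y yin Ey.
  have zC : z \in C by apply: (memE yin); rewrite -Ey set21.
  have nzC : next C0 z \in C by apply: (memE yin); rewrite -Ey set22.
  have Eq := key_share cac scCe sc0 (sc_next_neq irr sc0 zin) zC nzC zin
     (etrans (mem_next _ _) zin).
  have : [set u; v] \in cycle_edges C by rewrite Eq; apply/mem_cycle_edges; exists u.
  case/mem_cycle_edges => y' y'in Ey'.
  by have := sc_next scC y'in; rewrite /e' /remove /= -Ey' eqxx andbF.
have F3 : forall z, z \in C0 -> z != u -> c z != c (next C0 z).
  move=> z zin zu; have := V1 _ _ (F1 z zin zu); have := F2 z zin zu.
  by case: (c z); case: (c (next C0 z)).
have F4 : (c u != c v) = ~~ odd (size C0).
  have par := cycle_parity c U0.
  case: (rot_to uin) => i s Er.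
  rewrite -(count_rot _ i) Er /= in par.
  have U' : uniq (u :: s) by rewrite -Er rot_uniq.
  have Ss : size C0 = (size s).+1 by rewrite -(size_rot i) Er.
  have cs : count (fun z => c z != c (next C0 z)) s = size s.
    apply/eqP; rewrite -all_count; apply/allP => z zs.
    apply: F3; first by rewrite -(mem_rot i) Er inE zs orbT.
    move: U' => /= /andP[us _]; apply/eqP => E; by rewrite -E zs in us.
  rewrite cs Ss /= in par *.
  move: par; rewrite oddD oddb; by case: (c u != c v); case: (odd (size s)).
have Euv : forall x y, [set x; y] = [set u; v] -> x != y ->
    (c x || c y) = (c u || c v) /\ (c x && c y) = (c u && c v).
  move=> x y E xy; case: (set2_eqP xy E) => [[->->]|[->->]]; first by [].
  by rewrite orbC andbC.
have irrxy : forall x y, e x y -> x != y.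
  by move=> x y exy; apply: contraTneq exy => ->; rewrite irr.
split.
- move=> x y exy; case E: ([set x; y] == [set u; v]).
    rewrite (Euv x y (eqP E) (irrxy _ _ exy)).1.
    case O: (odd (size C0)); first by apply: hodd.
    by move: F4; rewrite O /=; case: (c u); case: (c v).
  by apply: V1; rewrite /e' /remove /= exy E.
- move=> x y exy cx cy; case E: ([set x; y] == [set u; v]).
    have TT : c u && c v by rewrite -(Euv x y (eqP E) (irrxy _ _ exy)).2 cx cy.
    case O: (odd (size C0)).
      exists C0; split; first by split.
      by rewrite (eqP E); apply/mem_cycle_edges; exists u.
    by move: F4 TT; rewrite O /=; case: (c u); case: (c v).
  have e'xy : e' x y by rewrite /e' /remove /= exy E.
  have [C [[scC oC] inC]] := V2 _ _ e'xy cx cy.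
  by exists C; split => //; split => //; apply: sc_e'e.
- move=> C [scC oC] x y xC yC cx cnx cy cny.
  have [SC UC _] := scC.
  case EC: (cycle_edges C == cycle_edges C0).
    have G : forall z, z \in C -> c z -> c (next C z) -> [set z; next C z] = [set u; v].
      move=> z zC cz cnz.
      have : [set z; next C z] \in cycle_edges C0.
        by rewrite -(eqP EC); apply/mem_cycle_edges; exists z.
      case/mem_cycle_edges => z0 z0in Ez.
      have nz : z != next C z := sc_next_neq irr scC zC.
      have TT0 : c z0 && c (next C0 z0).
        by case: (set2_eqP nz Ez) => [[<- <-]|[<- <-]]; rewrite ?cz ?cnz.
      case: (z0 =P u) => [z0u|/eqP z0u]; last by rewrite (negbTE (F2 _ z0in z0u)) in TT0.
      by rewrite Ez z0u.
    have Ex := G x xC cx cnx; have Ey := G y yC cy cny.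
    have := Ex; rewrite -Ey => Exy.
    case: (set2_eqP (sc_next_neq irr scC xC) Exy) => [[]//|[xny nxy]].
    by have := next_next_neq UC SC yC; rewrite -xny nxy eqxx.
  have Hn : forall z, z \in C -> [set z; next C z] != [set u; v].
    move=> z zC; apply/eqP => Ez.
    have uC : u \in C by apply: (memE zC); rewrite Ez set21.
    have vC : v \in C by apply: (memE zC); rewrite Ez set22.
    by have := key_share cac scC sc0 uv uC vC uin vin; move/eqP; rewrite EC.
  have scC' : simple_cycle e' C.
    split => //; apply: cycle_from_next => // z zC.
    by rewrite /e' /remove /= (sc_next scC zC) Hn.
  exact: (V3 C (conj scC' oC) x y xC yC cx cnx cy cny).
Qed.


Lemma remove_symm e u v : symmetric e -> symmetric (remove e u v).
Proof. by move=> sym a b; rewrite /remove /= sym [[set a; b]]setUC. Qed.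

Lemma lemB e u v c1 c2 : symmetric e -> irreflexive e -> cactusP e -> e u v ->
  ~~ connect (remove e u v) u v ->
  valid (remove e u v) c1 -> valid (remove e u v) c2 -> c1 u != c2 v ->
  valid e (fun z => if connect (remove e u v) v z then c2 z else c1 z).
Proof.
move=> sym irr cac euv nc [V11 V12 V13] [V21 V22 V23] cuv.
set e' := remove e u v in nc V11 V12 V13 V21 V22 V23 *.
set K := connect e' v.
set c := fun z => if K z then c2 z else c1 z.
have syme' : symmetric e' by apply: remove_symm.
have cs : connect_sym e' by apply: sym_connect_sym.
have KE : forall a b, e' a b -> K a = K b.
  move=> a b eab; apply/idP/idP => H; first exact: connect_trans H (connect1 eab).
  by apply: connect_trans H (connect1 _); rewrite syme'.
have Ku : K u = false by apply/negP; rewrite /K cs => H; rewrite H in nc.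
have Kv : K v by exact: connect0.
have cu : c u = c1 u by rewrite /c Ku.
have cv : c v = c2 v by rewrite /c Kv.
have ce : forall a b, e' a b ->
   (c a = c1 a /\ c b = c1 b) \/ (c a = c2 a /\ c b = c2 b).
  move=> a b eab; rewrite /c -(KE a b eab); case: (K a); by auto.
have irrxy : forall x y, e x y -> x != y.
  by move=> x y exy; apply: contraTneq exy => ->; rewrite irr.
have Euv : forall x y, [set x; y] = [set u; v] -> x != y -> c x != c y.
  move=> x y E xy; case: (set2_eqP xy E) => [[->->]|[->->]]; first by rewrite cu cv.
  by rewrite cu cv eq_sym.
have sc_e'e : forall C, simple_cycle e' C -> simple_cycle e C.
  by move=> C; apply: simple_cycle_sub; apply: remove_sub.
split.
- move=> x y exy; case E: ([set x; y] == [set u; v]).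
    by move: (Euv x y (eqP E) (irrxy _ _ exy)); case: (c x); case: (c y).
  have e'xy : e' x y by rewrite /e' /remove /= exy E.
  by case: (ce x y e'xy) => [[->->]|[->->]]; [apply: V11 | apply: V21].
- move=> x y exy cx cy; case E: ([set x; y] == [set u; v]).
    by move: (Euv x y (eqP E) (irrxy _ _ exy)); rewrite cx cy.
  have e'xy : e' x y by rewrite /e' /remove /= exy E.
  have [C [[scC oC] inC]] : exists C, oddcyc e' C /\ [set x; y] \in cycle_edges C.
    by case: (ce x y e'xy) => [[E1 E2]|[E1 E2]]; rewrite E1 E2 in cx cy;
      [apply: V12 | apply: V22].
  by exists C; split => //; split => //; apply: sc_e'e.
- move=> C [scC oC] x y xC yC cx cnx cy cny.
  have [SC UC _] := scC.
  have QE : forall z, z \in C -> K z != K (next C z) -> [set z; next C z] = [set u; v].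
    move=> z zC Qz; case E: ([set z; next C z] == [set u; v]); first exact/eqP.
    have : e' z (next C z) by rewrite /e' /remove /= (sc_next scC zC) E.
    by move/KE => H; rewrite H eqxx in Qz.
  have cnt : count (fun z => K z != K (next C z)) C <= 1.
    apply: count_le1 => // a b aC bC Qa Qb.
    have Eab : [set a; next C a] = [set b; next C b] by rewrite (QE a aC Qa) (QE b bC Qb).
    case: (set2_eqP (sc_next_neq irr scC aC) Eab) => [[]//|[anb nab]].
    by have := next_next_neq UC SC bC; rewrite -anb nab eqxx.
  have par := cycle_parity K UC.
  have cnt0 : count (fun z => K z != K (next C z)) C = 0.
    by move: cnt par; case: (count _ _) => [|[|]].
  have Hn : forall z, z \in C -> [set z; next C z] != [set u; v].
    move=> z zC; apply/eqP => Ez.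
    have Qz : K z != K (next C z).
      case: (set2_eqP (sc_next_neq irr scC zC) Ez) => [[->->]|[->->]];
      by rewrite Ku Kv.
    have : has (fun z => K z != K (next C z)) C by apply/hasP; exists z.
    by rewrite has_count cnt0.
  have e'C : forall z, z \in C -> e' z (next C z).
    by move=> z zC; rewrite /e' /remove /= (sc_next scC zC) Hn.
  have scC' : simple_cycle e' C.
    by split => //; apply: cycle_from_next.
  have Kc := cycle_const UC (fun z zC => KE _ _ (e'C z zC)).
  have nxC := etrans (mem_next C x) xC.
  have nyC := etrans (mem_next C y) yC.
  case Kx: (K x).
    have cE : forall z, z \in C -> c z = c2 z.
      by move=> z zC; rewrite /c (Kc z x zC xC) Kx.
    rewrite !cE // in cx cnx cy cny.
    exact: (V23 C (conj scC' oC) x y xC yC cx cnx cy cny).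
  have cE : forall z, z \in C -> c z = c1 z.
    by move=> z zC; rewrite /c (Kc z x zC xC) Kx.
  rewrite !cE // in cx cnx cy cny.
  exact: (V13 C (conj scC' oC) x y xC yC cx cnx cy cny).
Qed.


Lemma lemIso e c w b : symmetric e -> (forall x, ~~ e w x) -> valid e c ->
  valid e (fun z => if z == w then b else c z).
Proof.
move=> sym nw [V1 V2 V3].
have nw1 : forall x y, e x y -> x != w.
  by move=> x y exy; apply: contraTneq exy => ->; rewrite (negbTE (nw y)).
have nw2 : forall x y, e x y -> y != w.
  by move=> x y exy; apply: (nw1 y x); rewrite sym.
split.
- by move=> x y exy; rewrite (negbTE (nw1 _ _ exy)) (negbTE (nw2 _ _ exy)); apply: V1.
- move=> x y exy; rewrite (negbTE (nw1 _ _ exy)) (negbTE (nw2 _ _ exy)); apply: V2 exy.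
- move=> C [scC oC] x y xC yC.
  have H : forall z, z \in C -> z != w.
    by move=> z zC; apply: (nw1 z (next C z)); apply: sc_next scC zC.
  have nxC := etrans (mem_next C x) xC; have nyC := etrans (mem_next C y) yC.
  rewrite (negbTE (H _ xC)) (negbTE (H _ yC)) (negbTE (H _ nxC)) (negbTE (H _ nyC)).
  exact: V3.
Qed.

Lemma edges_remove e u v : e u v -> #|edges (remove e u v)| < #|edges e|.
Proof.
move=> euv; apply: proper_card; apply/properP; split.
  apply/subsetP => E /imset2P[x y _]; rewrite inE => /andP[_ /andP[exy _]] ->.
  by apply/imset2P; exists x y; rewrite ?inE ?exy.
exists [set u; v]; first by apply/imset2P; exists u v; rewrite ?inE ?euv.
apply/negP => /imset2P[x y _]; rewrite inE => /andP[_ /andP[_ ne]] E.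
by rewrite E eqxx in ne.
Qed.

Lemma cactus_remove e u v : cactusP e -> cactusP (remove e u v).
Proof.
move=> cac p q sp sq; apply: cac; apply: simple_cycle_sub sp || apply: simple_cycle_sub sq;
  apply: remove_sub.
Qed.

Lemma next_last_uniq (y : T) q : uniq (y :: q) -> next (y :: q) (last y q) = y.
Proof. by move=> U; have := cycle_next U; rewrite /= rcons_path => /andP[_ /eqP]. Qed.

Lemma main_ind n : forall e, #|edges e| <= n -> symmetric e -> irreflexive e ->
  cactusP e -> forall w b, exists c, valid e c /\ c w = b.
Proof.
elim: n => [|n IH] e He sym irr cac w b.
  exists (fun _ => b); split => //.
  have noe : forall x y, e x y = false.
    move=> x y; apply/negP => exy.
    have : [set x; y] \in edges e by apply/imset2P; exists x y; rewrite ?inE ?exy.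
    by move: He; rewrite leqn0 cards_eq0 => /eqP->; rewrite inE.
  split.
  - by move=> x y; rewrite noe.
  - by move=> x y; rewrite noe.
  - move=> C [sc _] x y xC.
    by have := sc_next sc xC; rewrite noe.
have IHr : forall u v, e u v -> forall w b, exists c, valid (remove e u v) c /\ c w = b.
  move=> u v euv; apply: IH.
  - by rewrite -ltnS; apply: leq_trans He; apply: edges_remove.
  - exact: remove_symm.
  - by move=> a; rewrite /remove /= irr.
  - exact: cactus_remove.
have nonisol : forall w b, (exists x, e w x) -> exists c, valid e c /\ c w = b.
  move=> {}w {}b [x ewx].
  have wx : w != x by apply: contraTneq ewx => ->; rewrite irr.
  set e1 := remove e w x.
  case: (boolP (connect e1 w x)) => [con|ncon]; last first.
    have [c1 [V1 c1w]] := IHr w x ewx w b.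
    have [c2 [V2 c2x]] := IHr w x ewx x (~~ b).
    have cuv : c1 w != c2 x by rewrite c1w c2x; case: b {c1w c2x}.
    have H := lemB sym irr cac ewx ncon V1 V2 cuv.
    eexists; split; first exact: H.
    have -> : connect e1 x w = false.
      apply/negP => Hc; move: ncon; by rewrite (sym_connect_sym (remove_symm _ _ sym)) Hc.
    by [].
  case/connectP: con => p pth lst.
  move: lst; case: (shortenP pth) => p' pth' U' _ lst.
  set C0 := w :: p'.
  have p'0 : p' != [::].
    by apply/eqP => E; move: lst; rewrite E /= => xw; rewrite xw eqxx in wx.
  have p'1 : forall y, p' != [:: y].
    move=> y; apply/eqP => E; move: pth' lst; rewrite E /= andbT => ey xy.
    by move: ey; rewrite -xy /e1 /remove /= eqxx andbF.
  have S0 : 2 < size C0.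
    by rewrite /C0; move: p'0 p'1; clear; case: p' => [|y [|z t]] // _ /(_ y); rewrite eqxx.
  have sc0 : simple_cycle e C0.
    split => //; rewrite /C0 /cycle rcons_path -lst sym ewx andbT.
    by apply: sub_path pth'; apply: remove_sub.
  have xin : x \in C0 by rewrite lst /C0 mem_last.
  have nx : next C0 x = w by rewrite lst next_last_uniq.
  have win : w \in C0 by rewrite mem_head.
  case O: (odd (size C0)); last first.
    have [c [V cw]] := IHr w x ewx w b.
    exists c; split => //; apply: (lemL irr cac sc0 xin); last by rewrite O.
    by rewrite nx remove_sym.
  case: b.
    have [c [V cw]] := IHr w x ewx w true.
    exists c; split => //; apply: (lemL irr cac sc0 xin).
      by rewrite nx remove_sym.
    by rewrite nx cw orbT.
  set y := prev C0 x.
  have yin : y \in C0 by rewrite mem_prev.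
  have ny : next C0 y = x by rewrite next_prev.
  have yw : y != w.
    apply/eqP => E; have := next_next_neq U' S0 win.
    by rewrite -/C0 -{1}E ny nx eqxx.
  have eyx : e y x by rewrite -ny; apply: sc_next sc0 yin.
  have [c [V cw]] := IHr y x eyx w false.
  exists c; split => //; apply: (lemL irr cac sc0 yin); first by rewrite ny.
  move=> _; rewrite ny.
  have [V1 _ _] := V.
  have e2 : remove e y x w x.
    rewrite /remove /= ewx /=; apply/eqP => E.
    case: (set2_eqP wx E) => [[E1 _]|[E1 _]]; first by rewrite E1 eqxx in yw.
    by rewrite E1 eqxx in wx.
  by have := V1 _ _ e2; rewrite cw /= => ->; rewrite orbT.
case: (boolP [exists x, e w x]) => [/existsP [x ex]|nx].
  by apply: nonisol; exists x.
case: (boolP [exists a, exists x, e a x]) => [/existsP [a /existsP [x eax]]|ne].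
  have [c [V _]] := nonisol a true (ex_intro _ x eax).
  exists (fun z => if z == w then b else c z); split; last by rewrite eqxx.
  apply: lemIso => // x0; apply/negP => ewx; move/existsP: nx; apply; by exists x0.
exists (fun _ => b); split => //.
have noe : forall x y, e x y = false.
  move=> x y; apply/negP => exy; move/existsP: ne; apply; exists x; apply/existsP; by exists y.
split.
- by move=> x y; rewrite noe.
- by move=> x y; rewrite noe.
- move=> C [sc _] x y xC.
  by have := sc_next sc xC; rewrite noe.
Qed.

End Graph.

Lemma decPP (P : Prop) : reflect P (Defs.decP P).
Proof. rewrite /Defs.decP; by case: excluded_middle_informative => h; constructor. Qed.

Lemma card_le_rel (X Y : finType) (A : {set X}) (B : {set Y}) (R : X -> Y -> Prop) :
  (forall a, a \in A -> exists b, b \in B /\ R a b) ->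
  (forall a a' b, a \in A -> a' \in A -> b \in B -> R a b -> R a' b -> a = a') ->
  #|A| <= #|B|.
Proof.
move=> H1 H2.
pose g a := [pick b in B | Defs.decP (R a b)].
have gA : forall a, a \in A -> exists2 b, g a = Some b & (b \in B) && Defs.decP (R a b).
  move=> a aA; rewrite /g; case: pickP => [b Hb|H]; first by exists b.
  have [b [bB Rab]] := H1 a aA.
  by have := H b; rewrite bB /=; case: decPP.
have inj : {in A &, injective g}.
  move=> a a' aA a'A E; have [b gb /andP[bB /decPP Rb]] := gA a aA.
  have [b' gb' /andP[bB' /decPP Rb']] := gA a' a'A.
  rewrite gb gb' in E; case: E => E; rewrite -E in Rb'.
  exact: H2 aA a'A bB Rb Rb'.
rewrite -(card_in_imset inj) -(card_imset B (@Some_inj _)).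
apply: subset_leq_card; apply/subsetP => o /imsetP[a aA ->].
have [b gb /andP[bB _]] := gA a aA; rewrite gb; by apply: imset_f.
Qed.

Lemma sumsetP A B k : reflect (exists2 a, a \in A & exists2 b, b \in B & k = (a + b)%N)
  (k \in sumset A B).
Proof. exact: (iffP (imfset2P _ _ _ _ _)). Qed.

Lemma seq_max (s : seq nat) a0 : a0 \in s ->
  exists2 m, m \in s & forall x, x \in s -> x <= m.
Proof.
elim: s a0 => [|y s IH] a0 //= _.
case: s IH => [|z s] IH.
  by exists y; rewrite ?mem_head // => x; rewrite inE => /eqP->.
have [m ms mmax] := IH z (mem_head _ _).
exists (maxn y m).
  by rewrite /maxn; case: ifP => _; rewrite inE ?ms ?eqxx ?orbT.
move=> x; rewrite inE => /orP[/eqP->|/mmax]; first by rewrite leq_maxl.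
by move=> h; rewrite (leq_trans h) // leq_maxr.
Qed.

Lemma sumsetC A B : sumset A B = sumset B A.
Proof.
apply/fsetP => k; apply/sumsetP/sumsetP => [][a aA [b bB ->]];
  by exists b => //; exists a => //; rewrite addnC.
Qed.

Lemma sumset0 B : sumset fset0 B = fset0.
Proof. by apply/fsetP => k; rewrite inE; apply/sumsetP => [][a]; rewrite inE. Qed.

Lemma fset_elem (A : {fset nat}) : 0 < #|` A| -> exists a, a \in A.
Proof. by rewrite cardfs_gt0 => /fset0Pn. Qed.

Lemma sumset_gtl A B : 0 < #|`A| -> 1 < #|`B| -> #|`A| < #|` sumset A B|.
Proof.
move=> hA hB.
have [a0 a0A] := fset_elem hA.
have [a aA amax] := seq_max a0A.
have [b0 b0B] := fset_elem (ltnW hB).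
have [b bB bmax] := seq_max b0B.
have : 0 < #|` (B `\ b)%fset| by move: hB; rewrite (cardfsD1 b B) bB.
case/fset_elem => b'; rewrite in_fsetD1 => /andP[b'b b'B].
have lt : b' < b by rewrite ltn_neqAle b'b bmax.
pose X := [fset (x + b')%N | x in A]%fset.
have cX : #|` X| = #|` A| by rewrite card_in_imfset //= => x y _ _ /addIn.
have nX : (a + b)%N \notin X.
  apply/negP => /imfsetP[x /= xA E].
  by have := leq_add (amax x xA) lt; rewrite addnS E ltnn.
have sub : ((a + b)%N |` X `<=` sumset A B)%fset.
  apply/fsubsetP => k /fset1UP[->|/imfsetP[x /= xA ->]];
    apply/sumsetP; [exists a => //; exists b | exists x => //; exists b'] => //.
have := fsubset_leq_card sub; rewrite cardfsU1 nX cX add1n; exact.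
Qed.

Lemma sumset_gt A B : 1 < #|`A| -> 1 < #|`B| -> maxn #|`A| #|`B| < #|` sumset A B|.
Proof.
move=> hA hB; rewrite gtn_max sumset_gtl ?(ltnW hA) //= sumsetC sumset_gtl //.
exact: ltnW.
Qed.

Lemma logn2_sum a b : a < b -> logn 2 (2 ^ a + 2 ^ b) = a.
Proof.
move=> ab.
have -> : 2 ^ a + 2 ^ b = 2 ^ a * (2 ^ (b - a)).+1.
  by rewrite mulnS -expnD subnKC ?(ltnW ab) // addnC.
rewrite lognM ?expn_gt0 // pfactorK //.
have -> : logn 2 (2 ^ (b - a)).+1 = 0.
  rewrite logn_coprime // prime_coprime // -[(2 ^ (b - a)).+1]addn1 dvdn_addr //.
  by rewrite dvdn_exp // subn_gt0.
by rewrite addn0.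
Qed.
Lemma pow2_sum a b c d : a < b -> c < d -> 2 ^ a + 2 ^ b = 2 ^ c + 2 ^ d -> a = c /\ b = d.
Proof.
move=> ab cd E.
have ac : a = c by rewrite -(logn2_sum ab) -(logn2_sum cd) E.
subst c; split => //; move/addnI: E; exact: expnI.
Qed.

Section Final.
Variable T : finType.

Lemma weak_edge (e : rel T) f x y : irreflexive e -> weak_IASI e f -> e x y ->
  ((#|` f x| == 1) || (#|` f y| == 1)) /\
  ((#|` sumset (f x) (f y)| == 1) = (#|` f x| == 1) && (#|` f y| == 1)).
Proof.
move=> irr [[inj _] W] exy.
have xy : x != y by apply: contraTneq exy => ->; rewrite irr.
have W0 := W x y exy.
have nx : 0 < #|` f x|.
  rewrite cardfs_gt0; apply/negP => /eqP E; move: W0; rewrite E sumset0 cardfs0 max0n.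
  move/esym/cardfs0_eq => E'; by move: xy; rewrite (inj x y) ?eqxx // E E'.
have ny : 0 < #|` f y|.
  rewrite cardfs_gt0; apply/negP => /eqP E; move: W0; rewrite E sumsetC sumset0 cardfs0 maxn0.
  move/esym/cardfs0_eq => E'; by move: xy; rewrite (inj x y) ?eqxx // E E'.
split.
  case: (leqP #|` f x| 1) => hx; first by apply/orP; left; lia.
  case: (leqP #|` f y| 1) => hy; first by apply/orP; right; lia.
  by have := sumset_gt hx hy; rewrite W0 ltnn.
rewrite W0; apply/idP/idP => [/eqP h|/andP[/eqP -> /eqP ->]] //.
apply/andP; split; apply/eqP; lia.
Qed.

Lemma lower (e : rel T) f : irreflexive e -> cactusP e -> weak_IASI e f ->
  num_odd_cycles e <= #|mono_indexed_edges e f|.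
Proof.
move=> irr cac wf.
rewrite /num_odd_cycles; apply: (card_le_rel (R := fun (X : {set {set T}}) (E : {set T}) => E \in X)).
  move=> X; rewrite inE => /decPP [p [sp op ->]].
  set S := fun z => #|` f z| == 1.
  have [_ U _] := sp.
  case: (boolP (has (fun z => S z && S (next p z)) p)) => [/hasP [z zin Hz]|/hasPn H].
    exists [set z; next p z]; split; last by apply/mem_cycle_edges; exists z.
    apply/imset2P; exists z (next p z); rewrite ?inE //=.
    by rewrite (sc_next sp zin) (weak_edge irr wf (sc_next sp zin)).2.
  exfalso.
  have cnt : count (fun z => S z != S (next p z)) p = size p.
    apply/eqP; rewrite -all_count; apply/allP => z zin.
    have := (weak_edge irr wf (sc_next sp zin)).1; have := H z zin.
    by rewrite /S; case: (_ == 1); case: (_ == 1).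
  by have := cycle_parity S U; rewrite cnt op.
move=> X X' E; rewrite !inE => /decPP [p [sp _ ->]] /decPP [p' [sp' _ ->]] _ inX inX'.
case/mem_cycle_edges: inX => z zin Ez.
case/mem_cycle_edges: inX' => z' zin' Ez'.
have zn := sc_next_neq irr sp zin.
have h1 : z \in p' by apply: (memE zin'); rewrite -Ez' Ez set21.
have h2 : next p z \in p' by apply: (memE zin'); rewrite -Ez' Ez set22.
exact: key_share cac sp sp' zn zin (etrans (mem_next _ _) zin) h1 h2.
Qed.


Lemma pow2_set a b c d : a != b -> c != d -> 2 ^ a + 2 ^ b = 2 ^ c + 2 ^ d ->
  (a = c /\ b = d) \/ (a = d /\ b = c).
Proof.
move=> ab cd E.
case: (ltngtP a b) ab => // hab _; case: (ltngtP c d) cd => // hcd _.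
- by left; apply: pow2_sum.
- by right; have [] := pow2_sum hab hcd (etrans E (addnC _ _)).
- by right; have [] := pow2_sum hab hcd (etrans (addnC _ _) E).
- by left; have [] := pow2_sum hab hcd (etrans (addnC _ _) (etrans E (addnC _ _))).
Qed.

Definition pw (z : T) : nat := 2 ^ enum_rank z.

Definition lab (c : pred T) (z : T) : {fset nat} :=
  if c z then [fset pw z]%fset else [fset pw z; (pw z).+1]%fset.

Lemma lab_min c z : pw z \in lab c z.
Proof. by rewrite /lab; case: (c z); rewrite ?in_fset1 ?in_fset2 eqxx. Qed.

Lemma lab_ge c z k : k \in lab c z -> pw z <= k.
Proof.
rewrite /lab; case: (c z); rewrite ?in_fset1 ?in_fset2; first by move/eqP->.
by case/orP => /eqP->.
Qed.

Lemma pw_inj : injective pw.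
Proof. move=> x y /expnI E; apply: enum_rank_inj; apply: val_inj; exact: E. Qed.

Lemma sum11 a b : sumset [fset a]%fset [fset b]%fset = [fset (a + b)%N]%fset.
Proof.
apply/fsetP => k; apply/sumsetP/idP.
  by case=> x /fset1P-> [y /fset1P-> ->]; apply/fset1P.
move/fset1P->; exists a; first exact/fset1P; exists b => //; exact/fset1P.
Qed.

Lemma sum12 a b : sumset [fset a]%fset [fset b; b.+1]%fset = [fset (a + b)%N; (a + b).+1]%fset.
Proof.
apply/fsetP => k; apply/sumsetP/idP.
  case=> x /fset1P-> [y yin ->]; move: yin; rewrite [y \in _]in_fset2 => /orP[] /eqP ->.
    by rewrite in_fset2 eqxx.
  by rewrite in_fset2 addnS eqxx orbT.
rewrite [k \in _]in_fset2 => /orP[] /eqP ->; exists a; try exact/fset1P.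
  by exists b; rewrite ?in_fset2 ?eqxx.
by exists b.+1; rewrite ?in_fset2 ?eqxx ?orbT ?addnS.
Qed.

Lemma sum21 a b : sumset [fset a; a.+1]%fset [fset b]%fset = [fset (a + b)%N; (a + b).+1]%fset.
Proof. by rewrite sumsetC sum12 addnC. Qed.

Lemma nSn n : (n != n.+1).
Proof. by rewrite neq_ltn ltnSn. Qed.

Lemma lab_card c z : #|` lab c z| = if c z then 1 else 2.
Proof. by rewrite /lab; case: (c z); rewrite ?cardfs1 ?cardfs2 ?nSn. Qed.

Lemma lab_sum_card c x y : c x || c y ->
  #|` sumset (lab c x) (lab c y)| = if c x && c y then 1 else 2.
Proof.
rewrite /lab; case: (c x); case: (c y) => //= _;
  by rewrite ?sum11 ?sum12 ?sum21 ?cardfs1 ?cardfs2 ?nSn.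
Qed.

Lemma lab_weak (e : rel T) c : irreflexive e -> valid e c -> weak_IASI e (lab c).
Proof.
move=> irr [V1 _ _]; split; [split|].
- move=> x y E; apply: pw_inj; apply/anti_leq/andP; split.
    by apply: (@lab_ge c); rewrite E lab_min.
  by apply: (@lab_ge c); rewrite -E lab_min.
- move=> x y u v exy euv E.
  have xy : x != y by apply: contraTneq exy => ->; rewrite irr.
  have uv : u != v by apply: contraTneq euv => ->; rewrite irr.
  have m1 : (pw x + pw y)%N \in sumset (lab c u) (lab c v).
    by rewrite -E; apply/sumsetP; exists (pw x); rewrite ?lab_min //; exists (pw y); rewrite ?lab_min.
  have m2 : (pw u + pw v)%N \in sumset (lab c x) (lab c y).
    by rewrite E; apply/sumsetP; exists (pw u); rewrite ?lab_min //; exists (pw v); rewrite ?lab_min.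
  have Eq : (pw x + pw y = pw u + pw v)%N.
    apply/anti_leq/andP; split.
      by case/sumsetP: m2 => a /lab_ge ha [b /lab_ge hb ->]; apply: leq_add.
    by case/sumsetP: m1 => a /lab_ge ha [b /lab_ge hb ->]; apply: leq_add.
  have ne : forall a b : T, a != b -> (enum_rank a : nat) != enum_rank b.
    by move=> a b; apply: contraNneq => /val_inj/enum_rank_inj ->.
  case: (pow2_set (ne _ _ xy) (ne _ _ uv) Eq) => [[h1 h2]|[h1 h2]].
    by rewrite (enum_rank_inj (val_inj h1)) (enum_rank_inj (val_inj h2)).
  by rewrite (enum_rank_inj (val_inj h1)) (enum_rank_inj (val_inj h2)) setUC.
- move=> x y exy; have := V1 x y exy => h.
  rewrite lab_sum_card // !lab_card.
  by move: h; case: (c x); case: (c y).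
Qed.

Lemma lab_mono (e : rel T) c E : valid e c -> E \in mono_indexed_edges e (lab c) ->
  exists x y, [/\ e x y, E = [set x; y], c x & c y].
Proof.
move=> [V1 _ _] /imset2P[x y _ H ->]; move: H; rewrite inE => /andP[_ /andP[exy h]].
exists x, y; move: h; rewrite lab_sum_card ?V1 //.
by case: (c x); case: (c y).
Qed.

Lemma upper (e : rel T) c : irreflexive e -> valid e c ->
  #|mono_indexed_edges e (lab c)| <= num_odd_cycles e.
Proof.
move=> irr V; have [V1 V2 V3] := V.
rewrite /num_odd_cycles; apply: (card_le_rel (R := fun (E : {set T}) (X : {set {set T}}) => E \in X)).
  move=> E /(lab_mono V) [x [y [exy -> cx cy]]].
  have [C [[sC oC] inC]] := V2 x y exy cx cy.
  exists (cycle_edges C); split => //; rewrite inE; apply/decPP; by exists C.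
move=> E E' X /(lab_mono V) [x [y [_ Ex cx cy]]] /(lab_mono V) [x' [y' [_ Ex' cx' cy']]].
rewrite inE => /decPP [C [sC oC ->]] /mem_cycle_edges [z zC Ez] /mem_cycle_edges [z' zC' Ez'].
have TT : forall a b a' b', [set a; b] = [set a'; b'] -> c a' -> c b' -> c a && c b.
  move=> a b a' b' Eab ca cb; have : a \in [set a'; b'] by rewrite -Eab set21.
  have : b \in [set a'; b'] by rewrite -Eab set22.
  by rewrite !inE => /orP[]/eqP-> /orP[]/eqP->; rewrite ?ca ?cb.
have /andP[h1 h2] := TT _ _ _ _ (etrans (esym Ez) Ex) cx cy.
have /andP[h3 h4] := TT _ _ _ _ (etrans (esym Ez') Ex') cx' cy'.
by rewrite Ez Ez' (V3 C (conj sC oC) z z' zC zC' h1 h2 h3 h4).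
Qed.

Lemma exists_valid (e : rel T) : symmetric e -> irreflexive e -> cactusP e ->
  exists c, valid e c.
Proof.
move=> sym irr cac; case: (pickP (@predT T)) => [w _|none].
  by have [c [V _]] := main_ind (leqnn _) sym irr cac w true; exists c.
exists predT; split.
- by move=> x; have := none x.
- by move=> x; have := none x.
- by move=> C _ x; have := none x.
Qed.

End Final.

Theorem theorem2p24 (T : finType) (e : rel T) :
  simple_graph e -> cactus e ->
  is_sparing_number e (num_odd_cycles e).
Proof.
move=> [sym irr] [_ cac].
have cac' : cactusP e := cac.
have [c V] := exists_valid sym irr cac'.
split.
  exists (lab c); split; first exact: lab_weak.
  apply/eqP; rewrite eqn_leq (upper irr V) /=.
  by apply: lower => //; apply: lab_weak.
by move=> f wf; apply: lower.
Qed.
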